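(* A standard ub-space $X$ is weakly u-II-compatible if and only if $\mathrm{PNS}(X)\subseteq\mathrm{FIN}(X)$.
   Context: Nonstandard framework: a standard universe with nonstandard extension $A\mapsto{}^*A$ satisfying transfer and sufficient saturation. An ub-space is a set $X$ with a uniformity $\mathcal{U}_X$ and a bornology $\mathcal{B}_X$ (a cover of $X$ closed under subsets and finite unions). $\mathrm{PNS}(X)=\bigcap_{U\in\mathcal{U}_X}\bigcup_{x\in X}{}^*U[x]$ (prenearstandard points), $\mathrm{FIN}(X)=\bigcup_{B\in\mathcal{B}_X}{}^*B$ (finite points). The topology and bornology of a space are II-compatible if each point has a bounded neighbourhood (for ub-spaces, w.r.t. the topology induced by the uniformity). An ub-space $X$ is weakly u-II-compatible if it is a subspace (uniform subspace, with bornology $\{B\cap X: B\in\mathcal{B}_{\bar X}\}$) of some Cauchy complete II-compatible ub-space $\bar X$. *)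

(* Defs.v *)
From Stdlib Require Import List Classical.
Import ListNotations.

Set Implicit Arguments.

Definition section {X : Type} (U : X * X -> Prop) (x : X) : X -> Prop :=
  fun y => U (x, y).

Definition is_filter {T : Type} (F : (T -> Prop) -> Prop) : Prop :=
  F (fun _ => True) /\
  (forall A B : T -> Prop, F A -> (forall t, A t -> B t) -> F B) /\
  (forall A B : T -> Prop, F A -> F B -> F (fun t => A t /\ B t)).

Definition proper_filter {T : Type} (F : (T -> Prop) -> Prop) : Prop :=
  is_filter F /\ ~ F (fun _ => False).

Definition is_uniformity {X : Type} (UX : (X * X -> Prop) -> Prop) : Prop :=
  is_filter UX /\
  (forall U, UX U -> forall x, U (x, x)) /\
  (forall U, UX U -> UX (fun p => U (snd p, fst p))) /\
  (forall U, UX U -> exists V, UX V /\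
      forall x y z, V (x, y) -> V (y, z) -> U (x, z)).

Definition is_bornology {X : Type} (BX : (X -> Prop) -> Prop) : Prop :=
  (forall x : X, exists B, BX B /\ B x) /\
  (forall A B : X -> Prop, BX B -> (forall x, A x -> B x) -> BX A) /\
  BX (fun _ => False) /\
  (forall A B : X -> Prop, BX A -> BX B -> BX (fun x => A x \/ B x)).

Definition ub_space {X : Type} (UX : (X * X -> Prop) -> Prop)
  (BX : (X -> Prop) -> Prop) : Prop :=
  is_uniformity UX /\ is_bornology BX.

Definition nbhd {X : Type} (UX : (X * X -> Prop) -> Prop) (x : X)
  (N : X -> Prop) : Prop :=
  exists U, UX U /\ forall y, section U x y -> N y.

Definition cauchy_filter {X : Type} (UX : (X * X -> Prop) -> Prop)
  (F : (X -> Prop) -> Prop) : Prop :=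
  proper_filter F /\
  forall U, UX U -> exists A, F A /\ forall x y, A x -> A y -> U (x, y).

Definition converges_to {X : Type} (UX : (X * X -> Prop) -> Prop)
  (F : (X -> Prop) -> Prop) (p : X) : Prop :=
  forall N, nbhd UX p N -> F N.

Definition cauchy_complete {X : Type} (UX : (X * X -> Prop) -> Prop) : Prop :=
  forall F, cauchy_filter UX F -> exists p, converges_to UX F p.

Definition II_compatible {X : Type} (UX : (X * X -> Prop) -> Prop)
  (BX : (X -> Prop) -> Prop) : Prop :=
  forall x, exists B, BX B /\ nbhd UX x B.

(* X is (via the injective map e, identifying X with a subset of Y) a
   subspace of the ub-space (Y, UY, BY): uniform subspace (trace uniformity)
   with the trace bornology. *)
Definition ub_subspace {X Y : Type} (e : X -> Y)
  (UX : (X * X -> Prop) -> Prop) (BX : (X -> Prop) -> Prop)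
  (UY : (Y * Y -> Prop) -> Prop) (BY : (Y -> Prop) -> Prop) : Prop :=
  (forall x1 x2, e x1 = e x2 -> x1 = x2) /\
  (forall U, UX U <-> exists V, UY V /\ forall x1 x2, U (x1, x2) <-> V (e x1, e x2)) /\
  (forall B, BX B <-> exists C, BY C /\ forall x, B x <-> C (e x)).

Definition weakly_u_II_compatible {X : Type} (UX : (X * X -> Prop) -> Prop)
  (BX : (X -> Prop) -> Prop) : Prop :=
  exists (Y : Type) (UY : (Y * Y -> Prop) -> Prop) (BY : (Y -> Prop) -> Prop)
         (e : X -> Y),
    ub_space UY BY /\ cauchy_complete UY /\ II_compatible UY BY /\
    ub_subspace e UX BX UY BY.

(* The nonstandard extension *T is modelled as the ultrapower T^I / Ult;
   points of *T are represented by functions I -> T (all notions below are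
   invariant under Ult-a.e. equality). *)

Definition ultrafilter {I : Type} (Ult : (I -> Prop) -> Prop) : Prop :=
  proper_filter Ult /\ forall A : I -> Prop, Ult A \/ Ult (fun i => ~ A i).

Definition star {I T : Type} (Ult : (I -> Prop) -> Prop) (A : T -> Prop)
  (f : I -> T) : Prop :=
  Ult (fun i => A (f i)).

(* Saturation hypothesis (enlargement property for X): every family of subsets
   of X with the finite intersection property has a common point in *X. *)
Definition fin_inter_prop {X : Type} (Fam : (X -> Prop) -> Prop) : Prop :=
  forall l : list (X -> Prop), Forall Fam l ->
    exists x, Forall (fun A => A x) l.

Definition saturated_for (X : Type) {I : Type} (Ult : (I -> Prop) -> Prop) : Prop :=
  forall Fam : (X -> Prop) -> Prop, fin_inter_prop Fam ->
    exists f : I -> X, forall A, Fam A -> star Ult A f.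

Definition PNS {I X : Type} (Ult : (I -> Prop) -> Prop)
  (UX : (X * X -> Prop) -> Prop) (f : I -> X) : Prop :=
  forall U, UX U -> exists x : X, star Ult (section U x) f.

Definition FIN {I X : Type} (Ult : (I -> Prop) -> Prop)
  (BX : (X -> Prop) -> Prop) (f : I -> X) : Prop :=
  exists B, BX B /\ star Ult B f.

(* Main.v *)
Require Import Defs.
From Stdlib Require Import List Classical.

Lemma pf_nonempty {T} (F : (T -> Prop) -> Prop) A :
  proper_filter F -> F A -> exists x, A x.
Proof.
  intros [[Ht [Hs Hi]] Hn] HA. apply NNPP; intro H. apply Hn.
  apply (Hs A); auto. intros t Ht'. apply H. exists t; auto.
Qed.

Lemma pf_inter_nonempty {T} (F : (T -> Prop) -> Prop) A B :
  proper_filter F -> F A -> F B -> exists x, A x /\ B x.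
Proof.
  intros HF HA HB. apply (pf_nonempty F); auto. destruct HF as [[_ [_ Hi]] _]. auto.
Qed.

Lemma unif_half {X} (UX : (X * X -> Prop) -> Prop) W :
  is_uniformity UX -> UX W -> exists V, UX V /\ forall a b c, V (a,b) -> V (b,c) -> W (a,c).
Proof. intros [_ [_ [_ H]]] HW. destruct (H W HW) as [V [HV HV']]. eauto. Qed.

Lemma unif_refl {X} (UX : (X * X -> Prop) -> Prop) W x :
  is_uniformity UX -> UX W -> W (x,x).
Proof. intros [_ [H _]] HW. apply H; auto. Qed.

Lemma unif_third {X} (UX : (X * X -> Prop) -> Prop) W :
  is_uniformity UX -> UX W -> exists V, UX V /\
    forall a b c d, V (a,b) -> V (b,c) -> V (c,d) -> W (a,d).
Proof.
  intros HU HW. destruct (unif_half UX W HU HW) as [V1 [HV1 H1]].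
  destruct (unif_half UX V1 HU HV1) as [V [HV H]].
  exists V; split; auto. intros a b c d h1 h2 h3.
  apply H1 with c. apply H with b; auto. apply H with d; auto.
  eapply unif_refl; eauto.
Qed.

Lemma fwd X (UX : (X * X -> Prop) -> Prop) (BX : (X -> Prop) -> Prop)
  I (Ult : (I -> Prop) -> Prop) (HUlt : ultrafilter Ult) :
  weakly_u_II_compatible UX BX ->
  (forall f : I -> X, PNS Ult UX f -> FIN Ult BX f).
Proof.
  intros (Y & UY & BY & e & [HUY HBY] & Hcomp & HII & Hinj & HU & HB) f Hf.
  destruct HUlt as [[[Ht [Hs Hi]] Hnf] _].
  set (F := fun A : Y -> Prop => Ult (fun i => A (e (f i)))).
  assert (HF : cauchy_filter UY F).
  { split. split. split. exact Ht. split.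
    - intros A B HA HAB. apply (Hs _ _ HA). intros; auto.
    - intros A B HA HB'. apply Hi; auto.
    - exact Hnf.
    - intros V HV. destruct (unif_half UY V HUY HV) as [V1 [HV1 H1]].
      set (W := fun p : Y * Y => V1 p /\ V1 (snd p, fst p)).
      assert (HW : UY W).
      { destruct HUY as [[_ [_ Hi']] [_ [Hinv _]]]. apply Hi'; auto. }
      set (U := fun p : X * X => W (e (fst p), e (snd p))).
      assert (HUU : UX U). { apply HU. exists W; split; auto. intros; simpl; tauto. }
      destruct (Hf U HUU) as [x Hx].
      exists (fun y => W (e x, y)). split. exact Hx.
      intros y z [_ Hy] [Hz _]. simpl in Hy. eauto. }
  destruct (Hcomp F HF) as [p Hp].
  destruct (HII p) as [C [HC HCn]].
  exists (fun x => C (e x)). split.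
  - apply HB. exists C; split; auto. intros; tauto.
  - apply (Hp C HCn).
Qed.

Definition hat {X} (W : X * X -> Prop) (F G : (X -> Prop) -> Prop) : Prop :=
  exists A B, F A /\ G B /\ forall a b, A a -> B b -> W (a,b).

Definition TT {X} (F : (X -> Prop) -> Prop) (W : X * X -> Prop) (x : X) : Prop :=
  exists P, F P /\ forall a, P a -> W (a,x).

Lemma fam_fip {X} (UX : (X * X -> Prop) -> Prop) (BX : (X -> Prop) -> Prop)
  (F : (X -> Prop) -> Prop) :
  ub_space UX BX ->
  forall l, Forall (fun A => exists W B, UX W /\ BX B /\
                     forall x, TT F W x -> ~ B x -> A x) l ->
  exists W B, UX W /\ BX B /\ forall x, TT F W x -> ~ B x -> Forall (fun A => A x) l.
Proof.
  intros [[[Ht [Hs Hi]] _] [_ [_ [B0 BU]]]] l Hl. induction Hl as [|A l HA Hl IH].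
  - exists (fun _ => True), (fun _ => False). repeat split; auto.
  - destruct HA as (W1 & B1 & HW1 & HB1 & H1). destruct IH as (W2 & B2 & HW2 & HB2 & H2).
    exists (fun p => W1 p /\ W2 p), (fun x => B1 x \/ B2 x). repeat split; auto.
    intros x [P [HP HPx]] Hn. constructor.
    + apply H1. exists P; split; auto. intros a Ha; apply HPx; auto. tauto.
    + apply H2. exists P; split; auto. intros a Ha; apply HPx; auto. tauto.
Qed.

Lemma II_key X (UX : (X * X -> Prop) -> Prop) (BX : (X -> Prop) -> Prop)
  (HX : ub_space UX BX)
  I (Ult : (I -> Prop) -> Prop)
  (HUlt : ultrafilter Ult) (Hsat : saturated_for X Ult)
  (Hpf : forall f : I -> X, PNS Ult UX f -> FIN Ult BX f) :
  forall F, cauchy_filter UX F -> exists W B, UX W /\ BX B /\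
    forall G, proper_filter G -> hat W F G -> G B.
Proof.
  intros F [HFp HFc]. apply NNPP; intro Hn.
  assert (Hk : forall W B, UX W -> BX B -> exists x, TT F W x /\ ~ B x).
  { intros W B HW HB. apply NNPP; intro Hk. apply Hn. exists W, B; repeat split; auto.
    intros G HG [A [Q [HA [HQ HAQ]]]].
    destruct HG as [[_ [Hs _]] _]. apply (Hs Q); auto. intros x Qx.
    apply NNPP; intro Bx. apply Hk. exists x; split; auto. exists A; split; auto. }
  set (Fam := fun A : X -> Prop => exists W B, UX W /\ BX B /\
                     forall x, TT F W x -> ~ B x -> A x).
  assert (Hfip : fin_inter_prop Fam).
  { intros l Hl. destruct (fam_fip UX BX F HX l Hl) as (W & B & HW & HB & H).
    destruct (Hk W B HW HB) as [x [Hx1 Hx2]]. exists x; auto. }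
  destruct (Hsat Fam Hfip) as [f Hf].
  destruct HX as [HU [_ [_ [HB0 _]]]].
  destruct HUlt as [[[Ht [Hs Hi]] Hnf] _].
  assert (HUT : UX (fun _ => True)). { destruct HU as [[H _] _]; exact H. }
  assert (Hpns : PNS Ult UX f).
  { intros U HUU. destruct (unif_half UX U HU HUU) as [V [HV HVU]].
    destruct (HFc V HV) as [P0 [HP0 HP0V]].
    destruct (pf_nonempty F P0 HFp HP0) as [x Hx].
    exists x. unfold star.
    assert (HT : Fam (TT F V)). { exists V, (fun _ => False). repeat split; auto. }
    apply (Hs _ _ (Hf _ HT)). intros i [P [HP HPV]].
    destruct (pf_inter_nonempty F P P0 HFp HP HP0) as [a [Ha1 Ha2]].
    unfold section. apply HVU with a; auto. }
  destruct (Hpf f Hpns) as [B [HB HBf]].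
  assert (HT : Fam (fun x => ~ B x)). { exists (fun _ => True), B. repeat split; auto. }
  apply Hnf. apply (Hs _ _ (Hi _ _ HBf (Hf _ HT))). intros i [h1 h2]. auto.
Qed.

Definition CFt {X} (UX : (X * X -> Prop) -> Prop) :=
  {F : (X -> Prop) -> Prop | cauchy_filter UX F}.

Definition UYd {X} (UX : (X * X -> Prop) -> Prop) (Z : CFt UX * CFt UX -> Prop) : Prop :=
  exists W, UX W /\ forall F G, hat W (proj1_sig F) (proj1_sig G) -> Z (F,G).

Definition BYd {X} (UX : (X * X -> Prop) -> Prop) (BX : (X -> Prop) -> Prop)
  (C : CFt UX -> Prop) : Prop :=
  exists B, BX B /\ forall F, C F -> proj1_sig F B.

Lemma princ_cauchy {X} (UX : (X * X -> Prop) -> Prop) (HU : is_uniformity UX) (x : X) :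
  cauchy_filter UX (fun A => A x).
Proof.
  split. split. split. exact I. split. intros A B HA HB; auto. intros A B HA HB; auto. auto.
  intros U HU'. exists (fun y => y = x). split; auto. intros a b -> ->.
  eapply unif_refl; eauto.
Qed.

Lemma hat_princ {X} (W : X * X -> Prop) a b :
  hat W (fun A => A a) (fun A => A b) <-> W (a,b).
Proof.
  split.
  - intros [A [B [HA [HB H]]]]. auto.
  - intros H. exists (fun y => y = a), (fun y => y = b). repeat split; auto.
    intros ? ? -> ->; auto.
Qed.

Lemma hat_self {X} (UX : (X * X -> Prop) -> Prop) W F :
  cauchy_filter UX F -> UX W -> hat W F F.
Proof.
  intros [_ Hc] HW. destruct (Hc W HW) as [A [HA HAW]]. exists A, A; auto.
Qed.

Lemma glue {X} (V : X * X -> Prop) (H K : (X -> Prop) -> Prop) C D x y :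
  proper_filter H -> proper_filter K -> hat V H K ->
  H C -> (forall c d, C c -> C d -> V (c,d)) ->
  K D -> (forall c d, D c -> D d -> V (c,d)) -> C x -> D y ->
  exists u v, V (x,u) /\ V (u,v) /\ V (v,y).
Proof.
  intros HH HK [P [Q [HP [HQ HPQ]]]] HC HCV HD HDV Hx Hy.
  destruct (pf_inter_nonempty H C P HH HC HP) as [u [u1 u2]].
  destruct (pf_inter_nonempty K D Q HK HD HQ) as [v [v1 v2]].
  exists u, v. auto.
Qed.

Definition glueset {X} (UX : (X * X -> Prop) -> Prop) (V : X * X -> Prop)
  (S : CFt UX -> Prop) (x : X) : Prop :=
  exists H, S H /\ exists C, proj1_sig H C /\ (forall c d, C c -> C d -> V (c,d)) /\ C x.

Lemma glueset_in {X} (UX : (X * X -> Prop) -> Prop) V S H :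
  UX V -> S H -> proj1_sig H (glueset UX V S).
Proof.
  intros HV HS. destruct (proj2_sig H) as [[[_ [Hs _]] _] Hc].
  destruct (Hc V HV) as [C [HC HCV]]. apply (Hs C); auto.
  intros x Cx. exists H; split; auto. exists C; auto.
Qed.

Lemma UYd_unif {X} (UX : (X * X -> Prop) -> Prop) :
  is_uniformity UX -> is_uniformity (UYd UX).
Proof.
  intros HU. pose proof HU as [[Ht [Hs Hi]] [Hr [Hinv Hh]]].
  split; [split; [|split]|split; [|split]].
  - exists (fun _ => True). split; auto.
  - intros A B [W [HW H]] HAB. exists W; split; auto.
  - intros A B [W1 [HW1 H1]] [W2 [HW2 H2]]. exists (fun p => W1 p /\ W2 p). split; auto.
    intros F G [P [Q [HP [HQ HPQ]]]]. split.
    + apply H1. exists P, Q; repeat split; auto. intros; apply HPQ; auto.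
    + apply H2. exists P, Q; repeat split; auto. intros; apply HPQ; auto.
  - intros Z [W [HW H]] F. apply H. apply (hat_self UX); auto. exact (proj2_sig F).
  - intros Z [W [HW H]]. exists (fun p => W (snd p, fst p)). split; auto.
    intros F G [P [Q [HP [HQ HPQ]]]]. simpl. apply H. exists Q, P; repeat split; auto.
    intros a b Ha Hb. exact (HPQ b a Hb Ha).
  - intros Z [W [HW H]]. destruct (unif_half UX W HU HW) as [V [HV HVW]].
    exists (fun q => hat V (proj1_sig (fst q)) (proj1_sig (snd q))). split.
    + exists V; split; auto.
    + intros F G K [A [B [HA [HB HAB]]]] [C [D [HC [HD HCD]]]]. apply H.
      destruct (proj2_sig G) as [HGp _].
      destruct (pf_inter_nonempty _ B C HGp HB HC) as [w [w1 w2]].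
      exists A, D; repeat split; auto. intros a d Ha Hd. apply HVW with w; auto.
Qed.

Lemma UYd_complete {X} (UX : (X * X -> Prop) -> Prop) :
  is_uniformity UX -> cauchy_complete (UYd UX).
Proof.
  intros HU Phi [[[Pt [Ps Pi]] Pn] Pc].
  set (p0 := fun A : X -> Prop => exists S, Phi S /\ forall H : CFt UX, S H -> proj1_sig H A).
  assert (Hp : cauchy_filter UX p0).
  { split. split. split.
    - exists (fun _ => True). split; auto. intros H _.
      destruct (proj2_sig H) as [[[h _] _] _]; exact h.
    - split.
      + intros A B [S [HS HSA]] HAB. exists S; split; auto. intros H HH.
        destruct (proj2_sig H) as [[[_ [h _]] _] _]. apply (h A); auto.
      + intros A B [S1 [HS1 H1]] [S2 [HS2 H2]]. exists (fun H => S1 H /\ S2 H).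
        split; auto. intros H [h1 h2].
        destruct (proj2_sig H) as [[[_ [_ h]] _] _]. apply h; auto.
    - intros [S [HS HSF]]. destruct (pf_nonempty Phi S (conj (conj Pt (conj Ps Pi)) Pn) HS) as [H HH].
      destruct (proj2_sig H) as [[_ h] _]. apply h; auto.
    - intros U HUU. destruct (unif_third UX U HU HUU) as [V [HV HVU]].
      destruct (Pc (fun q => hat V (proj1_sig (fst q)) (proj1_sig (snd q)))) as [S [HS HSV]].
      { exists V; split; auto. }
      exists (glueset UX V S). split.
      + exists S; split; auto. intros H HH. apply glueset_in; auto.
      + intros x y [H [HH [C [HC [HCV Cx]]]]] [K [HK [D [HD [HDV Dy]]]]].
        destruct (glue V _ _ C D x y (proj1 (proj2_sig H)) (proj1 (proj2_sig K))
                   (HSV H K HH HK) HC HCV HD HDV Cx Dy) as [u [v [h1 [h2 h3]]]].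
        eauto. }
  exists (exist _ p0 Hp). intros N [Z [[W [HW HZ]] HN]].
  destruct (unif_third UX W HU HW) as [V [HV HVW]].
  destruct (Pc (fun q => hat V (proj1_sig (fst q)) (proj1_sig (snd q)))) as [S [HS HSV]].
  { exists V; split; auto. }
  apply (Ps S); auto. intros G HG. apply HN. unfold section. apply HZ. simpl.
  destruct (proj2_sig G) as [HGp HGc]. destruct (HGc V HV) as [D [HD HDV]].
  exists (glueset UX V S), D. repeat split.
  - exists S; split; auto. intros H HH. apply glueset_in; auto.
  - exact HD.
  - intros a b [H [HH [C [HC [HCV Ca]]]]] Db.
    destruct (glue V _ _ C D a b (proj1 (proj2_sig H)) HGp
                   (HSV H G HH HG) HC HCV HD HDV Ca Db) as [u [v [h1 [h2 h3]]]].
    eauto.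
Qed.

Lemma bwd X (UX : (X * X -> Prop) -> Prop)
  (BX : (X -> Prop) -> Prop) (HX : ub_space UX BX)
  (I : Type) (Ult : (I -> Prop) -> Prop)
  (HUlt : ultrafilter Ult) (Hsat : saturated_for X Ult) :
  (forall f : I -> X, PNS Ult UX f -> FIN Ult BX f) -> weakly_u_II_compatible UX BX.
Proof.
  intros Hpf. pose proof (II_key X UX BX HX I Ult HUlt Hsat Hpf) as Hk.
  pose proof HX as [HU [Bc [Bs [B0 Bu]]]].
  set (e := fun x : X => exist (fun F => cauchy_filter UX F) (fun A : X -> Prop => A x)
                              (princ_cauchy UX HU x) : CFt UX).
  exists (CFt UX), (UYd UX), (BYd UX BX), e.
  assert (HII : II_compatible (UYd UX) (BYd UX BX)).
  { intros F. destruct (Hk (proj1_sig F) (proj2_sig F)) as (W & B & HW & HB & H).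
    exists (fun G : CFt UX => proj1_sig G B). split.
    - exists B; split; auto.
    - exists (fun q => hat W (proj1_sig (fst q)) (proj1_sig (snd q))). split.
      + exists W; split; auto.
      + intros G HG. apply H; auto. exact (proj1 (proj2_sig G)). }
  split; [split|split; [|split]].
  - apply UYd_unif; auto.
  - split; [|split; [|split]].
    + intros F. destruct (HII F) as [C [HC [Z [HZ HZC]]]]. exists C. split; auto.
      apply HZC. unfold section. destruct HZ as [W [HW HWZ]]. apply HWZ.
      apply (hat_self UX); auto. exact (proj2_sig F).
    + intros A B [B' [HB' H]] HAB. exists B'; split; auto.
    + exists (fun _ => False). split; auto. intros F [].
    + intros A B [B1 [HB1 H1]] [B2 [HB2 H2]]. exists (fun x => B1 x \/ B2 x).
      split; auto. intros F HF. destruct (proj2_sig F) as [[[_ [Hs' _]] _] _].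
      destruct HF as [HF|HF].
      * apply (Hs' B1); auto.
      * apply (Hs' B2); auto.
  - apply UYd_complete; auto.
  - exact HII.
  - split; [|split].
    + intros x1 x2 Heq. assert (h : proj1_sig (e x1) = proj1_sig (e x2)) by (rewrite Heq; auto).
      simpl in h. pose proof (f_equal (fun P => P (fun y => y = x1)) h) as h'.
      simpl in h'. symmetry. rewrite <- h'. reflexivity.
    + intros U. split.
      * intros HUU. exists (fun q => hat U (proj1_sig (fst q)) (proj1_sig (snd q))). split.
        -- exists U; split; auto.
        -- intros x1 x2. pose proof (hat_princ U x1 x2). simpl. tauto.
      * intros [V [[W [HW HWV]] HUV]]. pose proof HU as [[_ [Hs _]] _].
        apply (Hs W U HW). intros [a b] Hab. apply HUV. apply HWV. simpl.
        apply hat_princ. auto.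
    + intros B. split.
      * intros HB. exists (fun F : CFt UX => proj1_sig F B). split.
        -- exists B; split; auto.
        -- intros x; simpl; tauto.
      * intros [C [[B' [HB' H]] HBC]]. apply (Bs B B'); auto.
        intros x Bx. exact (H (e x) (proj1 (HBC x) Bx)).
Qed.

Theorem theorem2p27 (X : Type) (UX : (X * X -> Prop) -> Prop)
  (BX : (X -> Prop) -> Prop) (HX : ub_space UX BX)
  (I : Type) (Ult : (I -> Prop) -> Prop)
  (HUlt : ultrafilter Ult) (Hsat : saturated_for X Ult) :
  weakly_u_II_compatible UX BX <->
  (forall f : I -> X, PNS Ult UX f -> FIN Ult BX f).
Proof.
  split.
  - apply fwd; auto.
  - apply bwd; auto.
Qed.
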